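(* Let $k\ge0$ with $k\equiv0\pmod6$ and let $j\ge1$ be an integer. Then $b_{jk}=\sum_{i=0}^{j-1}3^{\,j-i-1}\binom{j}{j-i}b_k^{\,j-i}$.
   Context: For $n=3$, define nonnegative integers $a_r,b_r,c_r$ ($r\ge0$) by $a_0=1,b_0=0,c_0=0$ and $a_r=a_{r-1}+c_{r-1}$, $b_r=b_{r-1}+a_{r-1}$, $c_r=c_{r-1}+b_{r-1}$. Equivalently, for the Ducci map $D(x_1,x_2,x_3)=(x_1+x_2,x_2+x_3,x_3+x_1)$, one has $D^r(x_1,x_2,x_3)=(a_rx_1+b_rx_2+c_rx_3,\;c_rx_1+a_rx_2+b_rx_3,\;b_rx_1+c_rx_2+a_rx_3)$. *)

(* Defs.v *)
From mathcomp Require Import all_boot.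

Fixpoint abc (r : nat) : nat * nat * nat :=
  match r with
  | 0 => (1, 0, 0)
  | r'.+1 => let '(a, b, c) := abc r' in (a + c, b + a, c + b)
  end.

Definition a_ (r : nat) : nat := (abc r).1.1.
Definition b_ (r : nat) : nat := (abc r).1.2.
Definition c_ (r : nat) : nat := (abc r).2.

(* Main.v *)
Require Import Defs.
From mathcomp Require Import all_boot.
From mathcomp Require Import zify ring.

Definition mul (u v : nat * nat * nat) : nat * nat * nat :=
  (u.1.1 * v.1.1 + u.1.2 * v.2 + u.2 * v.1.2,
   u.1.1 * v.1.2 + u.1.2 * v.1.1 + u.2 * v.2,
   u.1.1 * v.2 + u.1.2 * v.1.2 + u.2 * v.1.1).

Lemma abc_add m n : abc (m + n) = mul (abc m) (abc n).
Proof.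
elim: m => [|m IH].
  rewrite add0n /mul /=; case: (abc n) => [[a b] c] /=; congr (_,_,_); lia.
rewrite addSn /= IH; case: (abc m) => [[a b] c]; case: (abc n) => [[x y] z].
rewrite /mul /=; congr (_,_,_); lia.
Qed.

Lemma abc_form k b : abc k = (1 + b, b, b) -> forall j,
  exists x, abc (j * k) = (1 + x, x, x) /\ 1 + 3 * x = (1 + 3 * b) ^ j.
Proof.
move=> Hk; elim=> [|j [x [Hx Ex]]]; first by exists 0.
exists (x + b + 3 * x * b); split.
  by rewrite mulSn abc_add Hk Hx /mul /=; congr (_,_,_); lia.
rewrite expnS -Ex; lia.
Qed.

Lemma abc6 n : exists b, abc (n * 6) = (1 + b, b, b).
Proof.
have := @abc_form 6 21 erefl n; case=> x [H _]; by exists x.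
Qed.

Lemma sum_id j b : 0 < j ->
  1 + 3 * \sum_(0 <= i < j) 3 ^ (j - i - 1) * 'C(j, j - i) * b ^ (j - i)
  = (1 + 3 * b) ^ j.
Proof.
move=> Hj.
rewrite big_distrr /=.
have -> : \sum_(0 <= i < j) 3 * (3 ^ (j - i - 1) * 'C(j, j - i) * b ^ (j - i))
   = \sum_(0 <= i < j) 'C(j, i.+1) * (3 * b) ^ i.+1.
  rewrite big_nat_rev /= add0n.
  apply: eq_big_nat => i /andP [_ Hi].
  have -> : j - (j - i.+1) = i.+1 by lia.
  have -> : i.+1 - 1 = i by lia.
  rewrite expnMn (expnS 3); move: (3 ^ i) ('C(j, i.+1)) (b ^ i.+1) => x y z; rewrite !mulnA (mulnC y); lia.
rewrite addnC expnDn big_ord_recl /= bin0 exp1n !mul1n addnC.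
congr (_ + _); rewrite big_mkord; apply: eq_bigr => i _.
by rewrite exp1n mul1n.
Qed.

Theorem lemma4p5 (k j : nat) :
  k %% 6 = 0 -> 1 <= j ->
  b_ (j * k) = \sum_(0 <= i < j) 3 ^ (j - i - 1) * 'C(j, j - i) * b_ k ^ (j - i).
Proof.
move=> Hk Hj.
have Ek : k = k %/ 6 * 6 by rewrite {1}(divn_eq k 6) Hk addn0.
have [b Hb] := abc6 (k %/ 6).
rewrite -Ek in Hb.
have -> : b_ k = b by rewrite /b_ Hb.
have [x [Hx Ex]] := @abc_form k b Hb j.
rewrite /b_ Hx /=.
have := @sum_id j b Hj; rewrite -Ex; lia.
Qed.
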